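(* Let $G$ be a group acting without inversions on a tree $T$ and let $A\subseteq B$ be subgroups of $G$, both containing hyperbolic elements. Let $v$ be a vertex of $T_{A}$ (so also of $T_B$), and consider the graph map $\pi_{B}:T_{A}/A \to T_{B}/B$, $[x]_{A}\mapsto[x]_{B}$. \begin{enumerate} \item If the stars are finite, then $|Star([v]_{A})|\leq |G_{v}\cap B|\cdot |Star([v]_{B})|$. \item If moreover $v$ is $B$-degenerate and $B_{v}$ stabilizes each edge of $T_B$ with initial vertex $v$, then the restriction $\pi_{B}: Star([v]_{A}) \to Star([v]_{B})$ is injective. \end{enumerate}
   Context: $T_A\subseteq T_B$ denote the unique minimal invariant subtrees of $A$ and $B$. $Star([v]_A)$ is the set of edges of $T_A/A$ with initial vertex $[v]_A$, and $Star([v]_B)$ the set of edges of $T_B/B$ with initial vertex $[v]_B$. A vertex $v$ is $B$-degenerate if $B_v=B_e$ for some edge $e$ of $T_B$ with initial vertex $v$. *)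

(* Defs.v *)
From HB Require Import structures.
From mathcomp Require Import all_boot.
From mathcomp Require Import boolp classical_sets cardinality.
From Stdlib Require Lists.List.

Set Implicit Arguments.
Unset Strict Implicit.
Unset Printing Implicit Defensive.

Local Open Scope classical_set_scope.

Record grp := {
  gcar :> Type;
  gmul : gcar -> gcar -> gcar;
  gone : gcar;
  ginv : gcar -> gcar;
  gmulA : forall x y z, gmul x (gmul y z) = gmul (gmul x y) z;
  gmul1g : forall x, gmul gone x = x;
  gmulVg : forall x, gmul (ginv x) x = gone
}.

Definition subgroup (G : grp) (H : set G) : Prop :=
  H (gone G) /\ (forall x y, H x -> H y -> H (gmul x y)) /\
  (forall x, H x -> H (ginv x)).

(* Paths in a Serre graph given by origin map [org] and reversal [rev];
   terminus of [e] is [org (rev e)].  [is_path x p y] : p is an edge path from x to y. *)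
Fixpoint is_path (V E : Type) (org : E -> V) (rev : E -> E)
    (x : V) (p : seq E) (y : V) : Prop :=
  match p with
  | [::] => x = y
  | e :: p' => org e = x /\ is_path org rev (org (rev e)) p' y
  end.

Fixpoint reduced (E : Type) (rev : E -> E) (p : seq E) : Prop :=
  match p with
  | e :: ((e' :: _) as p') => e' <> rev e /\ reduced rev p'
  | _ => True
  end.

Record GTree (G : grp) := {
  vert : Type;
  edge : Type;
  org : edge -> vert;
  rev : edge -> edge;
  revK : forall e, rev (rev e) = e;
  rev_neq : forall e, rev e <> e;
  vert_inhabited : inhabited vert;
  tree_connected : forall x y, exists p, is_path org rev x p y;
  tree_reduced_uniq : forall x y p q,
      is_path org rev x p y -> reduced rev p ->
      is_path org rev x q y -> reduced rev q -> p = q;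
  actv : G -> vert -> vert;
  acte : G -> edge -> edge;
  actv1 : forall x, actv (gone G) x = x;
  actvM : forall g h x, actv (gmul g h) x = actv g (actv h x);
  acte1 : forall e, acte (gone G) e = e;
  acteM : forall g h e, acte (gmul g h) e = acte g (acte h e);
  act_org : forall g e, org (acte g e) = actv g (org e);
  act_rev : forall g e, rev (acte g e) = acte g (rev e);
  no_inversion : forall g e, acte g e <> rev e
}.

Section Defs.
Variables (G : grp) (T : GTree G).
Local Notation V := (vert T).
Local Notation E := (edge T).

Definition term (e : E) : V := org (rev e).

(* hyperbolic element: fixes no vertex (action without inversions) *)
Definition hyperbolic (g : G) : Prop := forall x : V, actv g x <> x.

Definition subtree (SV : set V) (SE : set E) : Prop :=
  (exists x, SV x) /\
  (forall e, SE e -> SV (org e) /\ SE (rev e)) /\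
  (forall x y, SV x -> SV y ->
     exists p, is_path (@org _ T) (@rev _ T) x p y /\ (forall e, Stdlib.Lists.List.In e p -> SE e)).

Definition invariant (H : set G) (SV : set V) (SE : set E) : Prop :=
  (forall h x, H h -> SV x -> SV (actv h x)) /\
  (forall h e, H h -> SE e -> SE (acte h e)).

Definition minimal_invariant_subtree (H : set G) (SV : set V) (SE : set E) : Prop :=
  subtree SV SE /\ invariant H SV SE /\
  (forall SV' SE', subtree SV' SE' -> invariant H SV' SE' ->
     SV' `<=` SV -> SE' `<=` SE -> SV' = SV /\ SE' = SE).

Definition vorbit (H : set G) (x : V) : set V := [set y | exists h, H h /\ y = actv h x].
Definition eorbit (H : set G) (e : E) : set E := [set f | exists h, H h /\ f = acte h e].

Definition vstab (H : set G) (x : V) : set G := [set h | H h /\ actv h x = x].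
Definition estab (H : set G) (e : E) : set G := [set h | H h /\ acte h e = e].

(* Star([v]_H) in the quotient graph SE/H: the H-orbits of edges of the
   subtree whose initial vertex lies in the H-orbit of v *)
Definition star (H : set G) (SE : set E) (v : V) : set (set E) :=
  [set S | exists e, SE e /\ vorbit H v (org e) /\ S = eorbit H e].

(* the graph map [x]_A |-> [x]_B on edge classes: B-saturation *)
Definition proj_edge (B : set G) (S : set E) : set E :=
  [set f | exists e, S e /\ exists b, B b /\ f = acte b e].

Definition degenerate (B : set G) (SE : set E) (v : V) : Prop :=
  exists e, SE e /\ org e = v /\ vstab B v = estab B e.

End Defs.

Arguments hyperbolic {G} T g.
Arguments subtree {G} T SV SE.
Arguments invariant {G} T H SV SE.
Arguments minimal_invariant_subtree {G} T H SV SE.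
Arguments vorbit {G} T H x.
Arguments eorbit {G} T H e.
Arguments vstab {G} T H x.
Arguments estab {G} T H e.
Arguments star {G} T H SE v.
Arguments proj_edge {G} T B S.
Arguments degenerate {G} T B SE v.

(* Main.v *)
Require Import Defs.
From HB Require Import structures.
From mathcomp Require Import all_boot.
From mathcomp Require Import boolp classical_sets cardinality.
From Stdlib Require Import Lia.
From mathcomp Require Import zify.
From Stdlib Require ClassicalEpsilon.
Local Open Scope classical_set_scope.

Notation LIn := Stdlib.Lists.List.In.

Section Helpers.
Variables (G : grp) (T : GTree G).
Local Notation V := (vert T).
Local Notation E := (edge T).
Local Notation ipath := (@is_path V E (@org G T) (@Defs.rev G T)).
Local Notation red := (@reduced E (@Defs.rev G T)).
Local Notation av := (@actv G T).
Local Notation ae := (@acte G T).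
Local Notation rv := (@Defs.rev G T).

Lemma mulgV (x : G) : gmul x (ginv x) = gone G.
Proof.
set y := ginv x.
rewrite -[gmul x y]gmul1g -(gmulVg y) -gmulA [gmul y (gmul x y)]gmulA.
by rewrite /y gmulVg gmul1g.
Qed.

Lemma actvK (g : G) x : av (ginv g) (av g x) = x.
Proof. by rewrite -actvM gmulVg actv1. Qed.
Lemma acteK (g : G) e : ae (ginv g) (ae g e) = e.
Proof. by rewrite -acteM gmulVg acte1. Qed.
Lemma actvKV (g : G) x : av g (av (ginv g) x) = x.
Proof. by rewrite -actvM mulgV actv1. Qed.
Lemma acteKV (g : G) e : ae g (ae (ginv g) e) = e.
Proof. by rewrite -acteM mulgV acte1. Qed.

Lemma LIn_cat (e : E) s1 s2 : LIn e (s1 ++ s2) <-> LIn e s1 \/ LIn e s2.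
Proof.
elim: s1 => [|x s IH] /=; first by split; [right|case].
rewrite IH; tauto.
Qed.

Lemma path_cat x p q z : ipath x (p ++ q) z <-> exists y, ipath x p y /\ ipath y q z.
Proof.
elim: p x => [|e p IH] x /=.
  by split; [move=> h; exists x | case=> y [-> ]].
rewrite IH; split.
  by case=> -> [y [h1 h2]]; exists y.
by case=> y [[-> h1] h2]; split=> //; exists y.
Qed.

Lemma path_map (g : G) x p y : ipath x p y -> ipath (av g x) (map (ae g) p) (av g y).
Proof.
elim: p x => [|e p IH] x /=; first by move->.
case=> <- h; split; first by rewrite act_org.
by rewrite act_rev act_org; apply: IH.
Qed.

Lemma nat_min (P : nat -> Prop) n : P n -> exists m, P m /\ forall k, P k -> (m <= k)%N.
Proof.
elim: n {-2}n (leqnn n) => [|n IH] k.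
  rewrite leqn0 => /eqP -> h; exists 0%N; split => //.
move=> hk Pk.
case: (pselect (exists j, P j /\ (j < k)%N)) => [[j [Pj jk]]|nj].
  by apply: (IH j) => //; rewrite -ltnS (leq_trans jk hk).
exists k; split => // j Pj; case: (leqP k j) => // jk.
by exfalso; apply: nj; exists j.
Qed.

Lemma not_reduced p : ~ red p -> exists l e r, p = l ++ e :: rv e :: r.
Proof.
elim: p => [|e p IH] //=.
case: p IH => [|e' p] IH //= h.
case: (pselect (e' = rv e)) => [->|ne].
  by exists [::], e, p.
have : ~ red (e' :: p) by move=> hr; apply: h.
move/IH => [l [f [r eq]]].
by exists (e :: l), f, r; rewrite eq.
Qed.

Lemma shortest_reduced (P : set E) x p y :
  ipath x p y -> (forall e, LIn e p -> P e) ->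
  (forall q, ipath x q y -> (forall e, LIn e q -> P e) -> (size p <= size q)%N) ->
  red p.
Proof.
move=> hp hP hmin; apply: contrapT => /not_reduced [l [e [r eq]]].
subst p.
have := hmin (l ++ r).
rewrite !size_cat /=.
suff: ipath x (l ++ r) y /\ (forall f, LIn f (l ++ r) -> P f).
  by case=> h1 h2 /(_ h1 h2); lia.
split.
  move: hp => /path_cat [z [h1 /= [oe [orr h2]]]].
  apply/path_cat; exists z; split => //.
  by rewrite Defs.revK oe in h2.
move=> f /LIn_cat hf; apply: hP; apply/LIn_cat.
case: hf; first by left.
by right; right; right.
Qed.

Lemma shortest (P : set E) x y :
  (exists p, ipath x p y /\ (forall e, LIn e p -> P e)) ->
  exists p, ipath x p y /\ (forall e, LIn e p -> P e) /\ red p.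
Proof.
move=> [p0 h0].
have [m [[p [[hp hP] sz]] hm]] := nat_min (fun n => exists p, (ipath x p y /\ (forall e, LIn e p -> P e)) /\ size p = n) (size p0) (ex_intro _ p0 (conj h0 erefl)).
exists p; split => //; split => //.
apply: (@shortest_reduced P x p y hp hP) => q hq hQ.
rewrite sz; apply: hm; by exists q.
Qed.

Lemma reduced_cat p q : red p -> red q ->
  (forall p0 f e q0, p = rcons p0 f -> q = e :: q0 -> e <> rv f) -> red (p ++ q).
Proof.
elim: p => [|x p IH] //= hp hq hj.
case: p IH hp hj => [|y p] IH hp hj /=.
  clear IH; case: q hq hj => [|e q0] //= hq hj; split => //.
  exact: (hj [::] x e q0).
case: hp => hyx hp; split => //.
apply: IH => // p0 f e q0 eq1 eq2.
by apply: (hj (x :: p0) f e q0) => //; rewrite eq1.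
Qed.

Lemma bridge (V1 V2 : set V) (E1 E2 : set E) (a : G) :
  hyperbolic T a -> subtree T V1 E1 -> subtree T V2 E2 ->
  (forall x, V1 x -> V1 (av a x)) -> (forall x, V2 x -> V2 (av a x)) ->
  exists x, V1 x /\ V2 x.
Proof.
move=> hyp [[x0 hx0] [k1 c1]] [[y0 hy0] [k2 c2]] i1 i2.
apply: contrapT => hdis.
have dis : forall x, V1 x -> V2 x -> False by move=> x h1 h2; apply: hdis; exists x.
have [p0 hp0] := tree_connected x0 y0.
pose Pn := fun n => exists x y p, V1 x /\ V2 y /\ ipath x p y /\ size p = n.
have : Pn (size p0) by exists x0, y0, p0.
move/nat_min => [d [[x [y [p [hx [hy [hp sp]]]]]] hmin]].
have hmin' : forall x' y' q, V1 x' -> V2 y' -> ipath x' q y' -> (d <= size q)%N.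
  by move=> x' y' q h1 h2 h3; apply: hmin; exists x', y', q.
have rp : red p.
  apply: (@shortest_reduced setT x p y hp) => // q hq _.
  by rewrite sp; exact: hmin' hx hy hq.
have [e [p1 pe]] : exists e p1, p = e :: p1.
  case: p hp {sp rp} => [/= exy|e p1 _]; last by exists e, p1.
  by exfalso; apply: (dis x) => //; rewrite exy.
have [q1 [hq1 [hE1 rq1]]] := @shortest E1 _ _ (c1 _ _ (i1 _ hx) hx).
have [q2 [hq2 [hE2 rq2]]] := @shortest E2 _ _ (c2 _ _ hy (i2 _ hy)).
have hp' := @path_map a _ _ _ hp.
have rp' : red (map (ae a) p).
  apply: (@shortest_reduced setT _ _ _ hp') => // q hq _.
  by rewrite size_map sp; exact: hmin' (i1 _ hx) (i2 _ hy) hq.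
have hcat : ipath (av a x) (q1 ++ (p ++ q2)) (av a y).
  apply/path_cat; exists x; split => //.
  by apply/path_cat; exists y.
have r2 : red (p ++ q2).
  apply: reduced_cat => // pl f g q0 eqp eqq eg.
  have : E2 g by apply: hE2; rewrite eqq; left.
  move/k2 => [_]; rewrite eg Defs.revK => /k2 [hof _].
  move: hp; rewrite eqp -cats1 => /path_cat [z [hz /= [ofz _]]].
  have := hmin' _ _ _ hx hof; rewrite ofz => /(_ _ hz).
  by rewrite -sp eqp size_rcons ltnn.
have r3 : red (q1 ++ (p ++ q2)).
  apply: reduced_cat => // pl f g q0 eqq eqp eg.
  have : E1 f by apply: hE1; rewrite eqq -cats1; apply/LIn_cat; right; left.
  move/k1 => [hof _].
  move: eqp; rewrite pe /= => -[ge _]; rewrite -ge in eg.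
  move: hp; rewrite pe /= => -[_ hp1].
  rewrite eg Defs.revK in hp1.
  have := hmin' _ _ _ hof hy hp1.
  by rewrite -sp pe /= ltnn.
have equ := tree_reduced_uniq hcat r3 hp' rp'.
have : size (q1 ++ (p ++ q2)) = size (map (ae a) p) by rewrite equ.
rewrite !size_cat size_map.
case: q1 hq1 {hE1 rq1 hcat r3 equ} => [/= hax _|f q1 _ /= hs]; first exact: hyp hax.
by exfalso; move: hs; lia.
Qed.

Lemma inter_subtree (V1 V2 : set V) (E1 E2 : set E) :
  subtree T V1 E1 -> subtree T V2 E2 -> (exists x, V1 x /\ V2 x) ->
  subtree T (V1 `&` V2) (E1 `&` E2).
Proof.
move=> [_ [k1 c1]] [_ [k2 c2]] [x [h1 h2]]; split; first by exists x.
split.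
  move=> e [e1 e2]; have [o1 r1] := k1 e e1; have [o2 r2] := k2 e e2.
  by split; split.
move=> y z [y1 y2] [z1 z2].
have [q1 [hq1 [hE1 rq1]]] := @shortest E1 _ _ (c1 _ _ y1 z1).
have [q2 [hq2 [hE2 rq2]]] := @shortest E2 _ _ (c2 _ _ y2 z2).
have equ := tree_reduced_uniq hq1 rq1 hq2 rq2.
exists q1; split => // e he; split; first exact: hE1.
by rewrite equ in he; exact: hE2.
Qed.

Lemma eorbit_act (H : set G) (h : G) e : subgroup H -> H h ->
  eorbit T H (ae h e) = eorbit T H e.
Proof.
move=> [H1 [HM HV]] Hh; apply/seteqP; split => f /= [k [Hk ->]].
  by exists (gmul k h); split; [exact: HM | rewrite acteM].
exists (gmul k (ginv h)); split; first by apply: HM => //; apply: HV.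
by rewrite acteM acteK.
Qed.

End Helpers.

Local Open Scope card_scope.

Theorem lemma3p2 (G : grp) (T : GTree G) (A B : set G)
  (TAv TBv : set (vert T)) (TAe TBe : set (edge T)) (v : vert T) :
  subgroup A -> subgroup B -> A `<=` B ->
  (exists a, A a /\ hyperbolic T a) -> (exists b, B b /\ hyperbolic T b) ->
  minimal_invariant_subtree T A TAv TAe ->
  minimal_invariant_subtree T B TBv TBe ->
  TAv v ->
  (finite_set (star T A TAe v) -> finite_set (star T B TBe v) ->
     star T A TAe v #<= (vstab T B v `*` star T B TBe v)) /\
  (finite_set (star T A TAe v) -> finite_set (star T B TBe v) ->
     degenerate T B TBe v ->
     (forall e, TBe e -> org e = v -> forall b, vstab T B v b -> acte b e = e) ->
     forall S1 S2, star T A TAe v S1 -> star T A TAe v S2 ->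
       proj_edge T B S1 = proj_edge T B S2 -> S1 = S2).
Proof.
move=> sA sB AB [a [Aa hyp]] _ [stA [[iAv iAe] minA]] [stB [[iBv iBe] minB]] TAvv.
have sA' := sA; have sB' := sB.
case: sA' => [A1 [AM AV]]; case: sB' => [B1 [BM BV]].
have [eqV eqE] : TAv `&` TBv = TAv /\ TAe `&` TBe = TAe.
  apply: minA.
  - apply: inter_subtree => //; apply: (@bridge G T _ _ _ _ a hyp stA stB) => x hx.
      exact: iAv.
    by apply: iBv => //; apply: AB.
  - split => [h x Ah [h1 h2] | h e Ah [h1 h2]]; split.
    + exact: iAv.
    + by apply: iBv => //; apply: AB.
    + exact: iAe.
    + by apply: iBe => //; apply: AB.
  - by move=> x [].
  - by move=> x [].
have AEB : forall e, TAe e -> TBe e by move=> e; rewrite -eqE => -[].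
have norm : forall S, star T A TAe v S ->
    exists e, TAe e /\ org e = v /\ S = eorbit T A e.
  move=> S [e1 [he1 [[a1 [Aa1 oe]] ->]]].
  exists (acte (ginv a1) e1); split; first by apply: iAe => //; apply: AV.
  split; first by rewrite act_org oe actvK.
  by rewrite eorbit_act //; apply: AV.
split.
  move=> _ _.
  case: (pselect (inhabited (edge T))) => [iE|niE]; last first.
    apply/card_leP; apply/injfunPex.
    have nos : star T A TAe v -> False.
      move=> [S /set_mem /norm [e _]]; apply: niE; exact: inhabits e.
    by exists (fun s => False_rect _ (nos s)) => // s; case: (nos s).
  pose repA (S : set (edge T)) :=
    ClassicalEpsilon.epsilon iE (fun e => TAe e /\ org e = v /\ S = eorbit T A e).
  pose rep (C : set (edge T)) :=
    ClassicalEpsilon.epsilon iE (fun r => C r /\ org r = v).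
  pose bs (S : set (edge T)) :=
    ClassicalEpsilon.epsilon (inhabits (gone G))
      (fun b => vstab T B v b /\ repA S = acte b (rep (eorbit T B (repA S)))).
  have hrepA : forall S, star T A TAe v S ->
      TAe (repA S) /\ org (repA S) = v /\ S = eorbit T A (repA S).
    by move=> S hS; exact: (ClassicalEpsilon.epsilon_spec iE _ (norm S hS)).
  have hbs : forall S, star T A TAe v S ->
      vstab T B v (bs S) /\ repA S = acte (bs S) (rep (eorbit T B (repA S))).
    move=> S hS; apply: (ClassicalEpsilon.epsilon_spec (inhabits (gone G))
      (fun b => vstab T B v b /\ repA S = acte b (rep (eorbit T B (repA S))))).
    have [t [o _]] := hrepA S hS.
    have : eorbit T B (repA S) (rep (eorbit T B (repA S))) /\
           org (rep (eorbit T B (repA S))) = v.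
      apply: (ClassicalEpsilon.epsilon_spec iE (fun r => eorbit T B (repA S) r /\ org r = v)).
      exists (repA S); split => //.
      by exists (gone G); split => //; rewrite acte1.
    case=> -[b [Bb re]] ore.
    exists (ginv b); split; last by rewrite re acteK.
    split; first exact: BV.
    have bv : actv b v = v by rewrite -{1}o -act_org -re.
    by rewrite -{1}bv actvK.
  have target : forall S, star T A TAe v S ->
      (vstab T B v `*` star T B TBe v) (bs S, eorbit T B (repA S)).
    move=> S hS; have [t [o _]] := hrepA S hS; split; first by case: (hbs S hS).
    exists (repA S); split; first exact: AEB.
    split => //; exists (gone G); split => //; by rewrite actv1.
  apply/card_leP; apply/injfunPex.
  exists (fun s : star T A TAe v =>
     (SigSub (mem_set (target _ (set_mem (valP s)))) : (vstab T B v `*` star T B TBe v))) => //.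
  move=> [S1 h1] [S2 h2] _ _ /= heq.
  have := f_equal (fun z => proj1_sig z) heq => /= -[eb eo].
  have e12 : repA S1 = repA S2.
    by rewrite (hbs _ (set_mem h1)).2 (hbs _ (set_mem h2)).2 eb eo.
  have S12 : S1 = S2.
    by rewrite (hrepA _ (set_mem h1)).2.2 (hrepA _ (set_mem h2)).2.2 e12.
  subst S2; congr exist; exact: bool_irrelevance.
move=> _ _ _ hstab S1 S2 hS1 hS2 hproj.
have [e1 [t1 [o1 q1]]] := norm _ hS1.
have [e2 [t2 [o2 q2]]] := norm _ hS2.
subst S1 S2.
have : proj_edge T B (eorbit T A e1) e1.
  exists e1; split; first by exists (gone G); split => //; rewrite acte1.
  by exists (gone G); split => //; rewrite acte1.
rewrite hproj => -[e [[a2 [Aa2 ->]] [b [Bb e1eq]]]].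
have hB : B (gmul b a2) by apply: BM => //; apply: AB.
have fx : actv (gmul b a2) v = v by rewrite actvM -o2 -!act_org -e1eq o1.
have := hstab e2 (AEB _ t2) o2 (gmul b a2) (conj hB fx).
by rewrite acteM -e1eq => ->.
Qed.
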